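(* Let $X$ be a finite set and $k^*<k<|X|$ integers with $2k-k^*\le|X|$. Let $\mathcal{P}\subseteq\binom{X}{k}$ be such that whenever $Z,Y\in\binom{X}{k}$ satisfy $|Z\cap Y|=k^*$, we have $Z\in\mathcal{P}\Leftrightarrow Y\in\mathcal{P}$. Then either $\mathcal{P}=\emptyset$ or $\mathcal{P}=\binom{X}{k}$, or else $|X|=2k$, $k^*=0$, and for every $Y\in\binom{X}{k}$ we have $Y\in\mathcal{P}\Leftrightarrow X\setminus Y\in\mathcal{P}$ (i.e. $\mathcal{P}$ is a union of pairs $\{Y,X\setminus Y\}$).
   Context: $\binom{X}{k}=\{Y\subseteq X:|Y|=k\}$. *)

(* Defs.v *)
From mathcomp Require Import all_boot.
Set Implicit Arguments. Unset Strict Implicit. Unset Printing Implicit Defensive.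

Definition binom (X : finType) (k : nat) : {set {set X}} :=
  [set Y : {set X} | #|Y| == k].

(* Main.v *)
Require Import Defs.
From mathcomp Require Import all_boot zify.

Lemma sub_card (T : finType) (A : {set T}) m :
  m <= #|A| -> exists2 B : {set T}, B \subset A & #|B| = m.
Proof.
elim: m => [|m IH] H; first by exists set0; rewrite ?sub0set ?cards0.
have [B sBA cB] := IH (ltnW H).
have : #|A :\: B| > 0 by rewrite cardsDS //; lia.
case/card_gt0P => x; rewrite inE => /andP [xB xA].
exists (x |: B); first by rewrite subUset sub1set xA sBA.
by rewrite cardsU1 xB cB.
Qed.

Lemma find_Z (X : finType) k ks (Y : {set X}) a b :
  ks < k -> k < #|X| -> 2 * k - ks <= #|X| -> ~ (#|X| = 2 * k /\ ks = 0) ->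
  #|Y| = k -> a \in Y -> b \notin Y ->
  exists Z : {set X}, [/\ #|Z| = k, #|Z :&: Y| = ks & #|Z :&: (b |: (Y :\ a))| = ks].
Proof.
move=> h1 h2 h3 h4 cY aY bY.
have cYa : #|Y :\ a| = k.-1 by move: (cardsD1 a Y); rewrite aY cY; lia.
have cD : #|~: (b |: Y)| = #|X| - k.+1.
  by rewrite cardsCs setCK cardsU1 bY cY.
have ab : a != b by apply/eqP => e; rewrite -e aY in bY.
case: (ltnP (2 * k - ks) #|X|) => hlt.
- have [S1 s1 c1] := @sub_card _ (Y :\ a) ks ltac:(lia).
  have [S2 s2 c2] := @sub_card _ (~: (b |: Y)) (k - ks) ltac:(lia).
  have E : forall x, x \in S1 -> (x \in Y) && (x != a) by move=> x /(subsetP s1); rewrite !inE andbC.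
  have F : forall x, x \in S2 -> (x \notin Y) && (x != b) by move=> x /(subsetP s2); rewrite !inE negb_or andbC.
  have dI : S1 :&: S2 = set0.
    apply/setP => x; rewrite !inE; apply/negbTE/negP => /andP [/E/andP[xY _] /F/andP[nY _]]; by rewrite xY in nY.
  exists (S1 :|: S2); split.
  + by rewrite cardsU dI cards0 c1 c2; lia.
  + suff -> : (S1 :|: S2) :&: Y = S1 by [].
    apply/setP => x; rewrite !inE.
    case x1: (x \in S1); first by have /andP [-> _] := E x x1.
    case x2: (x \in S2) => //=; by have /andP [/negbTE -> _] := F x x2.
  + suff -> : (S1 :|: S2) :&: (b |: (Y :\ a)) = S1 by [].
    apply/setP => x; rewrite !inE.
    case x1: (x \in S1); first by have /andP [-> ->] := E x x1; rewrite orbT.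
    case x2: (x \in S2) => //=; have /andP [/negbTE -> xb] := F x x2.
    by rewrite (negbTE xb) andbF.
- have ks1 : 0 < ks by case: ks h1 h3 h4 hlt => [|ks] h1 h3 h4 hlt //; exfalso; apply: h4; lia.
  have [S1 s1 c1] := @sub_card _ (Y :\ a) ks.-1 ltac:(lia).
  have [S2 s2 c2] := @sub_card _ (~: (b |: Y)) (k - ks).-1 ltac:(lia).
  have E : forall x, x \in S1 -> (x \in Y) && (x != a) by move=> x /(subsetP s1); rewrite !inE andbC.
  have F : forall x, x \in S2 -> (x \notin Y) && (x != b) by move=> x /(subsetP s2); rewrite !inE negb_or andbC.
  have dI : S1 :&: S2 = set0.
    apply/setP => x; rewrite !inE; apply/negbTE/negP => /andP [/E/andP[xY _] /F/andP[nY _]]; by rewrite xY in nY.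
  have aS : a \notin S1 :|: S2.
    rewrite inE negb_or; apply/andP; split; apply/negP.
      by move/E; rewrite eqxx andbF.
    by move/F; rewrite aY.
  have bS : b \notin S1 :|: S2.
    rewrite inE negb_or; apply/andP; split; apply/negP.
      by move/E; rewrite (negbTE bY).
    by move/F; rewrite eqxx andbF.
  exists (a |: (b |: (S1 :|: S2))); split.
  + have aS2 : a \notin b |: (S1 :|: S2) by rewrite in_setU1 negb_or ab aS.
    rewrite cardsU1 aS2 cardsU1 bS cardsU dI cards0 c1 c2 /=; lia.
  + suff -> : (a |: (b |: (S1 :|: S2))) :&: Y = a |: S1.
      rewrite cardsU1 c1; have -> : a \notin S1 by move: aS; rewrite inE negb_or => /andP[].
      lia.
    apply/setP => x; rewrite !inE.
    case: (eqVneq x a) => [->|xa]; first by rewrite aY.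
    case: (eqVneq x b) => [->|xb] /=; first by rewrite (negbTE bY); apply/esym/negP => /E; rewrite (negbTE bY).
    case x1: (x \in S1); first by have /andP [-> _] := E x x1.
    case x2: (x \in S2) => //=; by have /andP [/negbTE -> _] := F x x2.
  + suff -> : (a |: (b |: (S1 :|: S2))) :&: (b |: (Y :\ a)) = b |: S1.
      rewrite cardsU1 c1; have -> : b \notin S1 by move: bS; rewrite inE negb_or => /andP[].
      lia.
    apply/setP => x; rewrite !inE.
    case: (eqVneq x b) => [->|xb] /=; first by rewrite orbT.
    case: (eqVneq x a) => [->|xa] /=; first by apply/esym/negP => /E; rewrite eqxx andbF.
    case x1: (x \in S1); first by have /andP [-> _] := E x x1.
    case x2: (x \in S2) => //=; by have /andP [/negbTE -> _] := F x x2.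
Qed.

Theorem claim12p3 (X : finType) (k kstar : nat) (P : {set {set X}}) :
  kstar < k -> k < #|X| -> 2 * k - kstar <= #|X| ->
  P \subset binom X k ->
  (forall Z Y : {set X}, Z \in binom X k -> Y \in binom X k ->
     #|Z :&: Y| = kstar -> (Z \in P) = (Y \in P)) ->
  P = set0 \/ P = binom X k \/
  [/\ #|X| = 2 * k, kstar = 0 &
      forall Y : {set X}, Y \in binom X k -> (Y \in P) = (~: Y \in P)].
Proof.
move=> h1 h2 h3 sub HP.
case: (boolP [&& #|X| == 2 * k & kstar == 0]) => [/andP[/eqP e1 /eqP e0] | hn].
  right; right; split => // Y YB; apply: HP => //.
    by move: YB; rewrite !inE => /eqP cY; move: (cardsC Y); rewrite cY e1 => hh; apply/eqP; lia.
  by rewrite setICr cards0.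
have h4 : ~ (#|X| = 2 * k /\ kstar = 0) by case=> e1 e0; move: hn; rewrite e1 e0 !eqxx.
have swap : forall Y a b, Y \in binom X k -> a \in Y -> b \notin Y ->
    (Y \in P) = (b |: (Y :\ a) \in P).
  move=> Y a b; rewrite inE => /eqP cY aY bY.
  have [Z [cZ c1 c2]] := @find_Z X k kstar Y a b h1 h2 h3 h4 cY aY bY.
  have ZB : Z \in binom X k by rewrite inE cZ.
  have YB : Y \in binom X k by rewrite inE cY.
  have Y'B : b |: (Y :\ a) \in binom X k.
    rewrite inE cardsU1 in_setD1 (negbTE bY) andbF /=.
    by move: (cardsD1 a Y); rewrite aY cY; lia.
  by rewrite (HP Y Z) ?(setIC Y) // (HP Z (b |: (Y :\ a))).
have all : forall n Y W, #|Y :\: W| <= n -> Y \in binom X k -> W \in binom X k ->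
    (Y \in P) = (W \in P).
  elim=> [|n IH] Y W.
    rewrite leqn0 cards_eq0 setD_eq0 => sYW; rewrite !inE => /eqP cY /eqP cW.
    suff -> : Y = W by [].
    by apply/eqP; rewrite eqEcard sYW cY cW leqnn.
  move=> hn1 YB WB.
  case: (eqVneq #|Y :\: W| 0) => [/eqP h0|hne]; first by apply: (IH) => //; rewrite (eqP h0).
  have /card_gt0P [a aYW] : 0 < #|Y :\: W| by rewrite lt0n.
  have cWY : #|W :\: Y| = #|Y :\: W|.
    move: YB WB; rewrite !inE => /eqP cY /eqP cW.
    by rewrite !cardsD setIC cY cW.
  have /card_gt0P [b bWY] : 0 < #|W :\: Y| by rewrite cWY lt0n.
  move: (aYW) (bWY); rewrite !inE => /andP [aW aY] /andP [bY bW].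
  rewrite (swap Y a b YB aY bY).
  apply: IH => //.
  - have -> : (b |: (Y :\ a)) :\: W = (Y :\: W) :\ a.
      apply/setP => x; rewrite !inE.
      case: (eqVneq x b) => [->|xb] /=; first by rewrite bW /= andbF.
      by case: (x \notin W); case: (x != a).
    by move: (cardsD1 a (Y :\: W)); rewrite aYW; lia.
  - move: YB; rewrite !inE => /eqP cY.
    rewrite cardsU1 in_setD1 (negbTE bY) andbF /=.
    by move: (cardsD1 a Y); rewrite aY cY; lia.
case: (set_0Vmem P) => [->|[Y YP]]; [by left | right; left].
have YB := subsetP sub Y YP.
apply/setP => W; case WB: (W \in binom X k).
  by rewrite -(all _ Y W (leqnn _)).
by apply/negbTE/negP => /(subsetP sub); rewrite WB.
Qed.
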